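(* The theory INT is equivalent to the theory FUN of normalized positive additive functionals on $R$: the interpretation sending $P(f)$ to $(0<I(f))$, together with the interpretation sending $(p<I(f))$ to $P(f-p)$ and $(I(f)<q)$ to $P(q-f)$, are mutually inverse interpretations between the two propositional geometric theories. In particular the points of INT correspond exactly to integrals on $R$.
   Context: $R$ is a Riesz space over $\mathbb{Q}$ with strong unit $1$ (for every $x$ there is $n$ with $-n1\le x\le n1$); rationals $r$ are identified with $r\cdot1$. INT is the propositional geometric theory with generators $P(f)$, $f\in R$, and relations: $P(1)=1$; $P(f)\wedge P(-f)=0$; $P(f+g)\le P(f)\vee P(g)$; $P(f)=0$ if $f\le0$; $P(f)=\bigvee_{s>0,\,s\in\mathbb{Q}}P(f-s)$. FUN is the propositional geometric theory with generators $(p<I(f))$ and $(I(f)<q)$ for $f\in R$, $p,q\in\mathbb{Q}$, with relations expressing that each $I(f)$ is a Dedekind real (namely: $(p<I(f))\le(p'<I(f))$ for $p'<p$; $(I(f)<q)\le(I(f)<q')$ for $q<q'$; $(p<I(f))=\bigvee_{p'>p}(p'<I(f))$; $(I(f)<q)=\bigvee_{q'<q}(I(f)<q')$; $1=(p<I(f))\vee(I(f)<q)$ for $p<q$; $0=(q<I(f))\wedge(I(f)<p)$ for $p<q$), and that $I(0)=0$, $I(f+g)=I(f)+I(g)$, $I(f)\ge0$ whenever $f\ge0$, and $I(1)=1$. An integral on $R$ is a positive linear functional $I:R\to\mathbb{R}$ with $I(1)=1$. *)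

(* Defs.v *)
From HB Require Import structures.
From mathcomp Require Import all_boot all_order all_algebra.
From Stdlib Require Import Reals ZArith.
Set Implicit Arguments. Unset Strict Implicit. Unset Printing Implicit Defensive.
Import Order.TTheory GRing.Theory Num.Theory.
Local Open Scope ring_scope.

(* A frame is presented as a preorder with top, bottom, binary meets,  *)
(* joins of arbitrary subsets and infinite distributivity; equality in *)
(* the frame is the induced equivalence [feq].                         *)
Record frame := Frame {
  fcar :> Type;
  fle : fcar -> fcar -> Prop;
  ftop : fcar;
  fbot : fcar;
  fmeet : fcar -> fcar -> fcar;
  fsup : (fcar -> Prop) -> fcar;
  fle_refl : forall a, fle a a;
  fle_trans : forall a b c, fle a b -> fle b c -> fle a c;
  ftop_max : forall a, fle a ftop;
  fbot_min : forall a, fle fbot a;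
  fmeet_l : forall a b, fle (fmeet a b) a;
  fmeet_r : forall a b, fle (fmeet a b) b;
  fmeet_glb : forall a b c, fle c a -> fle c b -> fle c (fmeet a b);
  fsup_ub : forall (S : fcar -> Prop) a, S a -> fle a (fsup S);
  fsup_lub : forall (S : fcar -> Prop) c, (forall a, S a -> fle a c) -> fle (fsup S) c;
  fdistr : forall a (S : fcar -> Prop),
    fle (fmeet a (fsup S)) (fsup (fun x => exists b, S b /\ x = fmeet a b))
}.

Definition feq (L : frame) (a b : L) : Prop := fle a b /\ fle b a.
Definition supfam (L : frame) (I : Type) (F : I -> L) : L :=
  fsup (fun x => exists i, x = F i).
Definition fjoin (L : frame) (a b : L) : L := fsup (fun x => x = a \/ x = b).
Definition fbool (L : frame) (b : bool) : L := if b then ftop L else fbot L.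

(* The frame of truth values (used for points). *)
Definition PropFrame : frame.
Proof.
refine (@Frame Prop (fun a b => a -> b) True False and
  (fun S => exists a, S a /\ a) _ _ _ _ _ _ _ _ _ _).
- tauto.
- tauto.
- tauto.
- tauto.
- tauto.
- tauto.
- tauto.
- intros S a Sa Ha; exists a; tauto.
- intros S c H [a [Sa Ha]]; exact (H a Sa Ha).
- intros a S [Ha [b [Sb Hb]]]; exists (a /\ b); split; [exists b; tauto | tauto].
Defined.

Definition is_riesz (V : lmodType rat) (le : V -> V -> Prop) : Prop :=
  (forall x, le x x) /\
  (forall x y z, le x y -> le y z -> le x z) /\
  (forall x y, le x y -> le y x -> x = y) /\
  (forall x y z, le x y -> le (x + z) (y + z)) /\
  (forall (r : rat) x y, 0 <= r -> le x y -> le (r *: x) (r *: y)) /\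
  (forall x y, exists z, le x z /\ le y z /\
      forall w, le x w -> le y w -> le z w).

Definition strong_unit (V : lmodType rat) (le : V -> V -> Prop) (u : V) : Prop :=
  forall x, exists n : nat, le (- (n%:R *: u)) x /\ le x (n%:R *: u).

(* Models of INT in a frame L: P : V -> L.  Rational r is r *: u.      *)
Definition INT_model (V : lmodType rat) (le : V -> V -> Prop) (u : V)
    (L : frame) (P : V -> L) : Prop :=
  feq (P u) (ftop L) /\
  (forall f, feq (fmeet (P f) (P (- f))) (fbot L)) /\
  (forall f g, fle (P (f + g)) (fjoin (P f) (P g))) /\
  (forall f, le f 0 -> feq (P f) (fbot L)) /\
  (forall f, feq (P f)
     (supfam (fun s : {s : rat | 0 < s} => P (f - (sval s) *: u)))).

(* Models of FUN in a frame L: Lo f p is (p < I(f)), Up f q is (I(f) < q). *)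
Definition FUN_model (V : lmodType rat) (le : V -> V -> Prop) (u : V)
    (L : frame) (Lo Up : V -> rat -> L) : Prop :=
  (* each I(f) is a Dedekind real *)
  (forall f (p p' : rat), p' < p -> fle (Lo f p) (Lo f p')) /\
  (forall f (q q' : rat), q < q' -> fle (Up f q) (Up f q')) /\
  (forall f p, feq (Lo f p)
     (supfam (fun p' : {p' : rat | p < p'} => Lo f (sval p')))) /\
  (forall f q, feq (Up f q)
     (supfam (fun q' : {q' : rat | q' < q} => Up f (sval q')))) /\
  (forall f (p q : rat), p < q -> feq (ftop L) (fjoin (Lo f p) (Up f q))) /\
  (forall f (p q : rat), p < q -> feq (fbot L) (fmeet (Lo f q) (Up f p))) /\
  (* I(0) = 0 *)
  (forall p : rat, feq (Lo 0 p) (fbool L (p < 0))) /\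
  (forall q : rat, feq (Up 0 q) (fbool L (0 < q))) /\
  (* I(f+g) = I(f) + I(g), as Dedekind reals *)
  (forall f g (r : rat), feq (Lo (f + g) r)
     (supfam (fun pq : {pq : rat * rat | pq.1 + pq.2 = r} =>
        fmeet (Lo f (sval pq).1) (Lo g (sval pq).2)))) /\
  (forall f g (s : rat), feq (Up (f + g) s)
     (supfam (fun pq : {pq : rat * rat | pq.1 + pq.2 = s} =>
        fmeet (Up f (sval pq).1) (Up g (sval pq).2)))) /\
  (* I(f) >= 0 whenever f >= 0, i.e. (I(f) < 0) = 0 *)
  (forall f, le 0 f -> feq (Up f 0) (fbot L)) /\
  (* I(1) = 1 *)
  (forall p : rat, feq (Lo u p) (fbool L (p < 1))) /\
  (forall q : rat, feq (Up u q) (fbool L (1 < q))).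

Definition INT_to_FUN_Lo (V : lmodType rat) (u : V) (L : frame) (P : V -> L)
  : V -> rat -> L := fun f p => P (f - p *: u).
Definition INT_to_FUN_Up (V : lmodType rat) (u : V) (L : frame) (P : V -> L)
  : V -> rat -> L := fun f q => P (q *: u - f).
Definition FUN_to_INT (V : lmodType rat) (L : frame) (Lo : V -> rat -> L)
  : V -> L := fun f => Lo f 0.

Definition int_to_Z (z : int) : Z :=
  match z with
  | Posz n => Z.of_nat n
  | Negz n => Z.opp (Z.of_nat n.+1)
  end.
Definition rat_to_R (r : rat) : R :=
  Rdiv (IZR (int_to_Z (numq r))) (IZR (int_to_Z (denq r))).

Definition is_integral (V : lmodType rat) (le : V -> V -> Prop) (u : V)
    (I : V -> R) : Prop :=
  (forall f g, I (f + g) = Rplus (I f) (I g)) /\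
  (forall (r : rat) f, I (r *: f) = Rmult (rat_to_R r) (I f)) /\
  (forall f, le 0 f -> Rle 0%R (I f)) /\
  I u = 1%R.

(* Main.v *)
Require Import Defs.
From HB Require Import structures.
From mathcomp Require Import all_boot all_order all_algebra.
From Stdlib Require Import Reals Lra Classical.
Import Order.TTheory GRing.Theory Num.Theory.
Set Implicit Arguments. Unset Strict Implicit. Unset Printing Implicit Defensive.
Local Open Scope ring_scope.

Lemma fle_tr (L : frame) (a b c : L) : fle a b -> fle b c -> fle a c.
Proof. exact: fle_trans. Qed.

Lemma fjoin_l (L : frame) (a b : L) : fle a (fjoin a b).
Proof. apply: fsup_ub; by left. Qed.
Lemma fjoin_r (L : frame) (a b : L) : fle b (fjoin a b).
Proof. apply: fsup_ub; by right. Qed.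
Lemma fjoin_lub (L : frame) (a b c : L) : fle a c -> fle b c -> fle (fjoin a b) c.
Proof. move=> ha hb; apply: fsup_lub => x [->|->] //. Qed.

Lemma supfam_ub (L : frame) (I : Type) (F : I -> L) i : fle (F i) (supfam F).
Proof. apply: fsup_ub; by exists i. Qed.
Lemma supfam_lub (L : frame) (I : Type) (F : I -> L) c :
  (forall i, fle (F i) c) -> fle (supfam F) c.
Proof. move=> h; apply: fsup_lub => x [i ->]; exact: h. Qed.

Lemma fmeet_mono (L : frame) (a b c d : L) : fle a c -> fle b d -> fle (fmeet a b) (fmeet c d).
Proof.
move=> h1 h2; apply: fmeet_glb.
- exact: fle_tr (fmeet_l _ _) h1.
- exact: fle_tr (fmeet_r _ _) h2.
Qed.

Lemma fjoin_mono (L : frame) (a b c d : L) : fle a c -> fle b d -> fle (fjoin a b) (fjoin c d).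
Proof.
move=> h1 h2; apply: fjoin_lub.
- exact: fle_tr h1 (fjoin_l _ _).
- exact: fle_tr h2 (fjoin_r _ _).
Qed.

Lemma fdistr2 (L : frame) (a b c : L) :
  fle (fmeet a (fjoin b c)) (fjoin (fmeet a b) (fmeet a c)).
Proof.
apply: fle_tr (fdistr _ _) _.
apply: fsup_lub => x [y [[->|->] ->]]; [exact: fjoin_l | exact: fjoin_r].
Qed.

Lemma fle_cut (L : frame) (x a b c : L) :
  fle x (fjoin a b) -> fle (fmeet x a) c -> fle x (fjoin c b).
Proof.
move=> h1 h2.
have h3 : fle x (fmeet x (fjoin a b)) by apply: fmeet_glb => //; exact: fle_refl.
apply: fle_tr h3 _; apply: fle_tr (fdistr2 _ _ _) _.
apply: fjoin_mono => //; exact: fmeet_r.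
Qed.

Lemma fle_join_bot (L : frame) (x a : L) :
  fle x (fjoin a (fbot L)) -> fle x a.
Proof.
move=> h; apply: fle_tr h _; apply: fjoin_lub; [apply: fle_refl | apply: fbot_min].
Qed.

Lemma feq_refl (L : frame) (a : L) : feq a a.
Proof. split; exact: fle_refl. Qed.
Lemma feq_sym (L : frame) (a b : L) : feq a b -> feq b a.
Proof. by case. Qed.
Lemma feq_trans (L : frame) (a b c : L) : feq a b -> feq b c -> feq a c.
Proof. case=> h1 h2 [h3 h4]; split; [exact: fle_tr h1 h3 | exact: fle_tr h4 h2]. Qed.

Lemma top_le (L : frame) (a : L) : fle (ftop L) a -> feq a (ftop L).
Proof. move=> h; split => //; exact: ftop_max. Qed.
Lemma le_bot (L : frame) (a : L) : fle a (fbot L) -> feq a (fbot L).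
Proof. move=> h; split => //; exact: fbot_min. Qed.

Lemma fbool_true (L : frame) (b : bool) (a : L) : b -> feq a (ftop L) -> feq a (fbool L b).
Proof. by move=> ->. Qed.
Lemma fbool_false (L : frame) (b : bool) (a : L) : ~~ b -> feq a (fbot L) -> feq a (fbool L b).
Proof. by move/negbTE=> ->. Qed.
Lemma rat_frac (c : rat) : 0 < c ->
  exists m n : nat, (0 < m)%nat /\ (0 < n)%nat /\ c * n%:R = m%:R.
Proof.
move=> c0.
have hn := denq_gt0 c. have hm : 0 < numq c by rewrite numq_gt0.
have := numqE c.
case: (numq c) hm => // m; case: (denq c) hn => // n hn hm E.
exists m, n; split => //; split => //.
Qed.

Lemma le_addr (V : lmodType rat) (le : V -> V -> Prop) (HR : is_riesz le) x y z :
  le x y -> le (x + z) (y + z).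
Proof. case: HR => _ [_ [_ [h _]]]; exact: h. Qed.
Lemma le_tr (V : lmodType rat) (le : V -> V -> Prop) (HR : is_riesz le) x y z :
  le x y -> le y z -> le x z.
Proof. case: HR => _ [h _]; exact: h. Qed.
Lemma le_rfl (V : lmodType rat) (le : V -> V -> Prop) (HR : is_riesz le) x : le x x.
Proof. case: HR => h _; exact: h. Qed.
Lemma le_scl (V : lmodType rat) (le : V -> V -> Prop) (HR : is_riesz le) (r : rat) x y :
  0 <= r -> le x y -> le (r *: x) (r *: y).
Proof. case: HR => _ [_ [_ [_ [h _]]]]; exact: h. Qed.

Lemma le_sub0 (V : lmodType rat) (le : V -> V -> Prop) (HR : is_riesz le) a b :
  le a b -> le (a - b) 0.
Proof. move=> h; have := le_addr HR (- b) h; by rewrite subrr. Qed.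
Lemma le_0sub (V : lmodType rat) (le : V -> V -> Prop) (HR : is_riesz le) a b :
  le a b -> le 0 (b - a).
Proof. move=> h; have := le_addr HR (- a) h; by rewrite subrr. Qed.
Lemma le_of_0sub (V : lmodType rat) (le : V -> V -> Prop) (HR : is_riesz le) a b :
  le 0 (b - a) -> le a b.
Proof. move=> h; have := le_addr HR a h; by rewrite add0r subrK. Qed.
Lemma le_of_sub0 (V : lmodType rat) (le : V -> V -> Prop) (HR : is_riesz le) a b :
  le (a - b) 0 -> le a b.
Proof. move=> h; have := le_addr HR b h; by rewrite add0r subrK. Qed.

Lemma le0u (V : lmodType rat) (le : V -> V -> Prop) (u : V) (HR : is_riesz le)
  (Hu : strong_unit le u) : le 0 u.
Proof.
case: (Hu u) => n [h _].
have := le_0sub HR h; rewrite opprK => h2.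
have hp : 0 <= (n.+1%:R : rat)^-1 by rewrite invr_ge0.
have := le_scl HR hp h2.
rewrite scaler0 -{1}[u]scale1r -scalerDl -natr1 addrC.
rewrite scalerA mulVf ?scale1r //.
by rewrite addrC natr1 pnatr_eq0.
Qed.

Lemma fle_join_elim (L : frame) (x a b : L) :
  fle x (fjoin a b) -> fle (fmeet x b) (fbot L) -> fle x a.
Proof.
move=> h1 h2.
have h3 : fle x (fmeet x (fjoin a b)) by apply: fmeet_glb => //; exact: fle_refl.
apply: fle_tr h3 _; apply: fle_tr (fdistr2 _ _ _) _.
apply: fjoin_lub; first exact: fmeet_r.
exact: fle_tr h2 (fbot_min _).
Qed.

Lemma P_mono (V : lmodType rat) (le : V -> V -> Prop) (u : V) (HR : is_riesz le)
  (L : frame) (P : V -> L) (HP : INT_model le u P) a b :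
  le a b -> fle (P a) (P b).
Proof.
case: HP => _ [_ [Hadd [Hle0 _]]] h.
have E : a = b + (a - b) by rewrite addrC subrK.
rewrite E; apply: fle_tr (Hadd _ _) _; apply: fjoin_lub; first exact: fle_refl.
have [h1 _] := Hle0 (a - b) (le_sub0 HR h).
exact: fle_tr h1 (fbot_min _).
Qed.

Lemma P_meet (V : lmodType rat) (le : V -> V -> Prop) (u : V)
  (L : frame) (P : V -> L) (HP : INT_model le u P) a b :
  fle (fmeet (P a) (P b)) (P (a + b)).
Proof.
case: HP => _ [Hneg [Hadd _]].
apply: (@fle_join_elim _ _ _ (P (- b))).
- apply: fle_tr (fmeet_l _ _) _.
  have E : a = (a + b) + (- b) by rewrite addrK.
  by rewrite {1}E.
- apply: fle_tr (proj1 (Hneg b)).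
  apply: fmeet_mono; [exact: fmeet_r | exact: fle_refl].
Qed.

Lemma P_kfold (V : lmodType rat) (le : V -> V -> Prop) (u : V)
  (L : frame) (P : V -> L) (HP : INT_model le u P) (k : nat) v :
  fle (P (k.+1%:R *: v)) (P v).
Proof.
case: HP => _ [_ [Hadd _]].
elim: k => [|k IH]; first by rewrite scale1r; exact: fle_refl.
rewrite -natr1 scalerDl scale1r.
apply: fle_tr (Hadd _ _) _; apply: fjoin_lub => //; exact: fle_refl.
Qed.

Lemma P_const (V : lmodType rat) (le : V -> V -> Prop) (u : V) (HR : is_riesz le)
  (Hu : strong_unit le u)
  (L : frame) (P : V -> L) (HP : INT_model le u P) (r : rat) :
  feq (P (r *: u)) (fbool L (0 < r)).
Proof.
have hu := le0u HR Hu.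
case: (leP r 0) => hr.
- apply: fbool_false => //.
  case: HP => _ [_ [_ [Hle0 _]]]; apply: Hle0.
  apply: le_of_0sub => //; rewrite sub0r -scaleNr.
  have := le_scl HR (r := - r) _ hu; rewrite scaler0; apply; by rewrite oppr_ge0.
- apply: fbool_true => //; apply: top_le.
  have [Hu1 _] := HP.
  apply: fle_tr (proj2 Hu1) _.
  case: (rat_frac hr) => m [n [hm [hn E]]].
  case: m hm E => // m _ E.
  apply: fle_tr (P_kfold HP n.-1 (r *: u)).
  rewrite prednK // scalerA mulrC E.
  apply: (P_mono HR HP); apply: le_of_0sub => //.
  rewrite -natr1 scalerDl scale1r addrK.
  have := le_scl HR (r := m%:R) _ hu; rewrite scaler0; apply; by rewrite ler0n.
Qed.

Lemma grid (L : frame) (X S : L) (A B : nat -> L) :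
  fle (ftop L) (A 0%nat) -> (forall k, fle X (fjoin (A k.+1) (B k))) ->
  (forall k, fle (fmeet (A k) (B k)) S) -> forall j, fle X (fjoin S (A j)).
Proof.
move=> h0 hX hS; elim=> [|j IH].
- apply: fle_tr (ftop_max _) _; apply: fle_tr h0 _; exact: fjoin_r.
- have h3 : fle X (fmeet X (fjoin S (A j))) by apply: fmeet_glb => //; exact: fle_refl.
  apply: fle_tr h3 _; apply: fle_tr (fdistr2 _ _ _) _.
  apply: fjoin_lub; first by apply: fle_tr (fmeet_r _ _) (fjoin_l _ _).
  have h4 : fle (fmeet X (A j)) (fmeet (A j) (fjoin (A j.+1) (B j))).
    by apply: fmeet_glb; [exact: fmeet_r | apply: fle_tr (fmeet_l _ _) (hX j)].
  apply: fle_tr h4 _; apply: fle_tr (fdistr2 _ _ _) _.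
  apply: fjoin_lub.
  + apply: fle_tr (fmeet_r _ _) (fjoin_r _ _).
  + apply: fle_tr (hS j) (fjoin_l _ _).
Qed.

Lemma vcomb (V : lmodType rat) (u f g : V) (a b : rat) :
  (f - a *: u) + (g - b *: u) = (f + g) - (a + b) *: u.
Proof. by rewrite scalerDl opprD addrACA. Qed.
Lemma vsub2 (V : lmodType rat) (u x : V) (a b : rat) :
  x - a *: u - b *: u = x - (a + b) *: u.
Proof. by rewrite scalerDl opprD addrA. Qed.
Lemma rat_id1 (c s r : rat) : (c + s) + (r - c) = r + s.
Proof. by rewrite addrAC addrCA subrr addr0. Qed.

Lemma P_add_split (V : lmodType rat) (le : V -> V -> Prop) (u : V) (HR : is_riesz le)
  (Hu : strong_unit le u)
  (L : frame) (P : V -> L) (HP : INT_model le u P) f g (r : rat) :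
  fle (P (f + g - r *: u))
    (supfam (fun pq : {pq : rat * rat | pq.1 + pq.2 = r} =>
        fmeet (P (f - (sval pq).1 *: u)) (P (g - (sval pq).2 *: u)))).
Proof.
have hu := le0u HR Hu.
have HP' := HP.
case: HP' => Hu1 [Hneg [Hadd [Hle0 Hsup]]].
apply: fle_tr (proj1 (Hsup _)) _.
apply: supfam_lub => -[s /= s0].
case: (rat_frac s0) => m [n [hm [hn E]]].
case: (Hu f) => n0 [hf1 hf2].
pose p0 : rat := - (n0.+1%:R).
pose p (k : nat) : rat := p0 + k%:R * s.
pose A k := P (f - p k *: u).
pose B k := P (g - (r - p k) *: u).
set S := supfam _.
have hA0 : fle (ftop L) (A 0%nat).
  apply: fle_tr (proj2 Hu1) _; apply: (P_mono HR HP).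
  apply: le_of_0sub => //.
  rewrite /p /p0 mul0r addr0 scaleNr opprK.
  have -> : f + n0.+1%:R *: u - u = f - - (n0%:R *: u).
    by rewrite -natr1 scalerDl scale1r opprK addrA addrK.
  exact: le_0sub.
have hX : forall k, fle (P (f + g - r *: u - s *: u)) (fjoin (A k.+1) (B k)).
  move=> k; rewrite /A /B.
  have -> : f + g - r *: u - s *: u = (f - p k.+1 *: u) + (g - (r - p k) *: u).
    rewrite vcomb vsub2; congr (_ - _ *: _).
    rewrite /p -natr1 mulrDl mul1r [p0 + (_ + s)]addrA; symmetry; exact: rat_id1.
  exact: (Hadd _ _).
have hS : forall k, fle (fmeet (A k) (B k)) S.
  move=> k.
  have e : (p k, r - p k).1 + (p k, r - p k).2 = r by rewrite /= addrC subrK.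
  exact: (supfam_ub _ (exist _ (p k, r - p k) e)).
pose N := ((n0.+1 + n0) * n)%nat.
have hAN : fle (A N) (fbot L).
  apply: (proj1 (Hle0 _ _)); apply: le_sub0 => //.
  apply: (le_tr HR hf2).
  apply: le_of_0sub => //; rewrite -scalerBl.
  have := le_scl HR (r := p N - n0%:R) _ hu; rewrite scaler0; apply.
  rewrite subr_ge0 /p /p0 /N natrM -mulrA [n%:R * s]mulrC E -natrM.
  rewrite -(lerD2l (n0.+1%:R)) addrA subrr add0r -natrD ler_nat.
  by rewrite addnC leq_pmulr.
have := grid hA0 hX hS N.
move=> h; apply: fle_tr h _; apply: fjoin_lub; first exact: fle_refl.
exact: fle_tr hAN (fbot_min _).
Qed.

Lemma vid1 (V : lmodType rat) (u f : V) (a b : rat) :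
  (f - a *: u) + (b *: u - f) = (b - a) *: u.
Proof. by rewrite addrC addrA subrK -scalerBl. Qed.

Lemma INT_FUN (V : lmodType rat) (le : V -> V -> Prop) (u : V) (HR : is_riesz le)
  (Hu : strong_unit le u)
  (L : frame) (P : V -> L) (HP : INT_model le u P) :
  FUN_model le u (INT_to_FUN_Lo u P) (INT_to_FUN_Up u P).
Proof.
have hu := le0u HR Hu.
have HP' := HP.
case: HP' => Hu1 [Hneg [Hadd [Hle0 Hsup]]].
rewrite /FUN_model /INT_to_FUN_Lo /INT_to_FUN_Up.
split.
  move=> f p p' h; apply: (P_mono HR HP); apply: le_of_0sub => //.
  rewrite opprB addrC addrA subrK -scalerBl.
  have := le_scl HR (r := p - p') _ hu; rewrite scaler0; apply; by rewrite subr_ge0 ltW.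
split.
  move=> f q q' h; apply: (P_mono HR HP); apply: le_of_0sub => //.
  rewrite opprB addrA subrK -scalerBl.
  have := le_scl HR (r := q' - q) _ hu; rewrite scaler0; apply; by rewrite subr_ge0 ltW.
split.
  move=> f p; split.
  - apply: fle_tr (proj1 (Hsup _)) _; apply: supfam_lub => -[s s0] /=.
    rewrite vsub2.
    have hs : p < p + s by rewrite ltrDl.
    exact: (supfam_ub (fun p' : {p' : rat | p < p'} => P (f - sval p' *: u)) (exist _ (p + s) hs)).
  - apply: supfam_lub => -[p' hp] /=; apply: fle_tr _ (proj2 (Hsup _)).
    have -> : f - p' *: u = f - p *: u - (p' - p) *: u by rewrite vsub2 [p + _]addrC subrK.
    have hs : 0 < p' - p by rewrite subr_gt0.
    exact: (supfam_ub (fun s : {s : rat | 0 < s} => P (f - p *: u - sval s *: u)) (exist _ (p' - p) hs)).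
split.
  move=> f q; split.
  - apply: fle_tr (proj1 (Hsup _)) _; apply: supfam_lub => -[s s0] /=.
    rewrite addrAC -scalerBl.
    have hs : q - s < q by rewrite gtrBl.
    exact: (supfam_ub (fun q' : {q' : rat | q' < q} => P (sval q' *: u - f)) (exist _ (q - s) hs)).
  - apply: supfam_lub => -[q' hq] /=; apply: fle_tr _ (proj2 (Hsup _)).
    have -> : q' *: u - f = q *: u - f - (q - q') *: u
      by rewrite addrAC -scalerBl opprB [q + _]addrC subrK.
    have hs : 0 < q - q' by rewrite subr_gt0.
    exact: (supfam_ub (fun s : {s : rat | 0 < s} => P (q *: u - f - sval s *: u)) (exist _ (q - q') hs)).
split.
  move=> f p q h; split; last exact: ftop_max.
  have hq : 0 < q - p by rewrite subr_gt0.
  have := P_const HR Hu HP (q - p); rewrite hq => -[_ h2].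
  apply: fle_tr h2 _; rewrite -(vid1 u f p q); exact: Hadd.
split.
  move=> f p q h; split; first exact: fbot_min.
  have hq : ~~ (0 < p - q) by rewrite subr_gt0 -leNgt ltW.
  apply: fle_tr (P_meet HP _ _) _; rewrite vid1.
  have := P_const HR Hu HP (p - q); rewrite (negbTE hq) => -[h2 _]; exact: h2.
split.
  move=> p; rewrite sub0r -scaleNr.
  have := P_const HR Hu HP (- p); by rewrite oppr_gt0.
split.
  move=> q; rewrite subr0; exact: (P_const HR Hu HP).
split.
  move=> f g r; split; first exact: (P_add_split HR Hu HP).
  apply: supfam_lub => -[[a b] /= e]; apply: fle_tr (P_meet HP _ _) _.
  rewrite vcomb e; exact: fle_refl.
split.
  move=> f g s; split.
  - have -> : s *: u - (f + g) = (- f) + (- g) - (- s) *: u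
      by rewrite scaleNr opprK opprD addrC.
    apply: fle_tr (P_add_split HR Hu HP _ _ _) _.
    apply: supfam_lub => -[[a b] /= e].
    have e' : (- a, - b).1 + (- a, - b).2 = s by rewrite /= -opprD e opprK.
    have := supfam_ub (fun pq : {pq : rat * rat | pq.1 + pq.2 = s} =>
        fmeet (P ((sval pq).1 *: u - f)) (P ((sval pq).2 *: u - g))) (exist _ (- a, - b) e').
    have E1 : (- a) *: u - f = - f - a *: u by rewrite scaleNr addrC.
    have E2 : (- b) *: u - g = - g - b *: u by rewrite scaleNr addrC.
    by rewrite /= E1 E2.
  - apply: supfam_lub => -[[a b] /= e]; apply: fle_tr (P_meet HP _ _) _.
    rewrite addrACA -opprD -scalerDl e; exact: fle_refl.
split.
  move=> f h; rewrite scale0r sub0r; apply: Hle0.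
  have := le_addr HR (- f) h; by rewrite add0r subrr.
split.
  move=> p; have -> : u - p *: u = (1 - p) *: u by rewrite scalerBl scale1r.
  have := P_const HR Hu HP (1 - p); by rewrite subr_gt0.
move=> q; have -> : q *: u - u = (q - 1) *: u by rewrite scalerBl scale1r.
have := P_const HR Hu HP (q - 1); by rewrite subr_gt0.
Qed.

Lemma fjoin_comm (L : frame) (a b : L) : fle (fjoin a b) (fjoin b a).
Proof. apply: fjoin_lub; [exact: fjoin_r | exact: fjoin_l]. Qed.

Lemma supfam_feq (L : frame) (I : Type) (F G : I -> L) :
  (forall i, feq (F i) (G i)) -> feq (supfam F) (supfam G).
Proof.
move=> h; split; apply: supfam_lub => i.
- apply: fle_tr (proj1 (h i)) _; exact: supfam_ub.
- apply: fle_tr (proj2 (h i)) _; exact: supfam_ub.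
Qed.

Definition FUNm (V : lmodType rat) (le : V -> V -> Prop) (u : V) (L : frame)
  (Lo Up : V -> rat -> L) := FUN_model le u Lo Up.

Lemma F_meetadd_lo (V : lmodType rat) (le : V -> V -> Prop) (u : V) (L : frame)
  (Lo Up : V -> rat -> L) (H : FUN_model le u Lo Up) f g a b :
  fle (fmeet (Lo f a) (Lo g b)) (Lo (f + g) (a + b)).
Proof.
case: H => _ [_ [_ [_ [_ [_ [_ [_ [Hladd _]]]]]]]].
apply: fle_tr _ (proj2 (Hladd f g (a + b))).
have e : (a, b).1 + (a, b).2 = a + b by [].
exact: (supfam_ub (fun pq : {pq : rat * rat | pq.1 + pq.2 = a + b} =>
        fmeet (Lo f (sval pq).1) (Lo g (sval pq).2)) (exist _ (a, b) e)).
Qed.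

Lemma F_meetadd_up (V : lmodType rat) (le : V -> V -> Prop) (u : V) (L : frame)
  (Lo Up : V -> rat -> L) (H : FUN_model le u Lo Up) f g a b :
  fle (fmeet (Up f a) (Up g b)) (Up (f + g) (a + b)).
Proof.
case: H => _ [_ [_ [_ [_ [_ [_ [_ [_ [Huadd _]]]]]]]]].
apply: fle_tr _ (proj2 (Huadd f g (a + b))).
have e : (a, b).1 + (a, b).2 = a + b by [].
exact: (supfam_ub (fun pq : {pq : rat * rat | pq.1 + pq.2 = a + b} =>
        fmeet (Up f (sval pq).1) (Up g (sval pq).2)) (exist _ (a, b) e)).
Qed.

Lemma F_lo_le (V : lmodType rat) (le : V -> V -> Prop) (u : V) (L : frame)
  (Lo Up : V -> rat -> L) (H : FUN_model le u Lo Up) f (p p' : rat) :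
  p' <= p -> fle (Lo f p) (Lo f p').
Proof.
case: H => Hm _; rewrite le_eqVlt => /orP [/eqP ->|h]; [exact: fle_refl | exact: Hm].
Qed.

Lemma F_lo00 (V : lmodType rat) (le : V -> V -> Prop) (u : V) (L : frame)
  (Lo Up : V -> rat -> L) (H : FUN_model le u Lo Up) :
  fle (Lo 0 0) (fbot L).
Proof.
case: H => _ [_ [_ [_ [_ [_ [Hlo0 _]]]]]]; exact: (proj1 (Hlo0 0)).
Qed.

Lemma F_up00 (V : lmodType rat) (le : V -> V -> Prop) (u : V) (L : frame)
  (Lo Up : V -> rat -> L) (H : FUN_model le u Lo Up) :
  fle (Up 0 0) (fbot L).
Proof.
case: H => _ [_ [_ [_ [_ [_ [_ [Hup0 _]]]]]]]; exact: (proj1 (Hup0 0)).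
Qed.

Lemma F_neg (V : lmodType rat) (le : V -> V -> Prop) (u : V) (L : frame)
  (Lo Up : V -> rat -> L) (H : FUN_model le u Lo Up) v b :
  feq (Lo (- v) b) (Up v (- b)).
Proof.
have H' := H.
case: H' => _ [_ [Hlo_open [Hup_open [Hloc _]]]].
split.
- apply: fle_tr (proj1 (Hlo_open _ _)) _; apply: supfam_lub => -[b' hb] /=.
  have h1 : - b' < - b by rewrite ltrN2.
  apply: (@fle_join_elim _ _ _ (Lo v (- b'))).
  + apply: fle_tr (ftop_max _) _; apply: fle_tr (proj1 (Hloc v _ _ h1)) _.
    exact: fjoin_comm.
  + apply: fle_tr (F_meetadd_lo H _ _ _ _) _.
    rewrite addNr addrN; exact: (F_lo00 H).
- apply: fle_tr (proj1 (Hup_open _ _)) _; apply: supfam_lub => -[q hq] /=.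
  have h1 : b < - q by rewrite ltrNr.
  apply: (@fle_join_elim _ _ _ (Up (- v) (- q))).
  + apply: fle_tr (ftop_max _) _; exact: (proj1 (Hloc _ _ _ h1)).
  + apply: fle_tr (F_meetadd_up H _ _ _ _) _.
    rewrite addrN addrN; exact: (F_up00 H).
Qed.

Lemma F_kfold (V : lmodType rat) (le : V -> V -> Prop) (u : V) (L : frame)
  (Lo Up : V -> rat -> L) (H : FUN_model le u Lo Up) (k : nat) v b :
  fle (Lo v b) (Lo (k.+1%:R *: v) (k.+1%:R * b)).
Proof.
elim: k => [|k IH]; first by rewrite scale1r mul1r; exact: fle_refl.
rewrite -[k.+2]addn1 natrD scalerDl mulrDl scale1r mul1r.
apply: fle_tr (F_meetadd_lo H _ _ _ _).
apply: fmeet_glb => //; exact: fle_refl.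
Qed.

Lemma F_kfold_up (V : lmodType rat) (le : V -> V -> Prop) (u : V) (L : frame)
  (Lo Up : V -> rat -> L) (H : FUN_model le u Lo Up) (k : nat) v b :
  fle (Up v b) (Up (k.+1%:R *: v) (k.+1%:R * b)).
Proof.
have h1 := proj2 (F_neg H v (- b)). rewrite opprK in h1.
apply: fle_tr h1 _.
apply: fle_tr (F_kfold H k _ _) _.
rewrite scalerN mulrN.
have h2 := proj1 (F_neg H (k.+1%:R *: v) (- (k.+1%:R * b))); rewrite opprK in h2; exact: h2.
Qed.

Lemma F_ub (V : lmodType rat) (le : V -> V -> Prop) (u : V) (L : frame)
  (Lo Up : V -> rat -> L) (H : FUN_model le u Lo Up) v (c : rat) :
  (forall y, c < y -> fle (ftop L) (Up v y)) -> forall x, c <= x -> fle (Lo v x) (fbot L).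
Proof.
have H' := H.
case: H' => _ [_ [Hlo_open [_ [_ [Hdisj _]]]]] hy x hx.
apply: fle_tr (proj1 (Hlo_open _ _)) _; apply: supfam_lub => -[x' hx'] /=.
apply: fle_tr (proj1 (Hlo_open _ _)) _; apply: supfam_lub => -[x'' hx''] /=.
apply: fle_tr _ (proj2 (Hdisj v x' x'' hx'')).
apply: fmeet_glb; first exact: fle_refl.
apply: fle_tr (ftop_max _) _; apply: hy; exact: le_lt_trans hx hx'.
Qed.

Lemma F_lb (V : lmodType rat) (le : V -> V -> Prop) (u : V) (L : frame)
  (Lo Up : V -> rat -> L) (H : FUN_model le u Lo Up) v (c : rat) :
  (forall y, y < c -> fle (ftop L) (Lo v y)) -> forall x, x <= c -> fle (Up v x) (fbot L).
Proof.
have H' := H.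
case: H' => _ [_ [_ [Hup_open [_ [Hdisj _]]]]] hy x hx.
apply: fle_tr (proj1 (Hup_open _ _)) _; apply: supfam_lub => -[x' hx'] /=.
apply: fle_tr (proj1 (Hup_open _ _)) _; apply: supfam_lub => -[x'' hx''] /=.
apply: fle_tr _ (proj2 (Hdisj v x'' x' hx'')).
apply: fmeet_glb; last exact: fle_refl.
apply: fle_tr (ftop_max _) _; apply: hy; exact: lt_le_trans hx' hx.
Qed.

Lemma F_const_of (V : lmodType rat) (le : V -> V -> Prop) (u : V) (L : frame)
  (Lo Up : V -> rat -> L) (H : FUN_model le u Lo Up) v (c : rat) :
  (forall x, c <= x -> fle (Lo v x) (fbot L)) ->
  (forall x, x <= c -> fle (Up v x) (fbot L)) ->
  (forall b, feq (Lo v b) (fbool L (b < c))) /\ (forall b, feq (Up v b) (fbool L (c < b))).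
Proof.
have H' := H.
case: H' => _ [_ [_ [_ [Hloc _]]]] hl hu.
split => b.
- case: (ltP b c) => h.
  + apply: top_le; apply: fle_join_bot.
    apply: fle_tr (proj1 (Hloc v b c h)) _; apply: fjoin_mono; first exact: fle_refl.
    exact: hu.
  + exact: le_bot (hl _ h).
- case: (ltP c b) => h.
  + apply: top_le; apply: fle_join_bot.
    apply: fle_tr (proj1 (Hloc v c b h)) _; apply: fle_tr (fjoin_comm _ _) _.
    apply: fjoin_mono; first exact: fle_refl.
    exact: hl.
  + exact: le_bot (hu _ h).
Qed.

Lemma F_const_pos (V : lmodType rat) (le : V -> V -> Prop) (u : V) (L : frame)
  (Lo Up : V -> rat -> L) (H : FUN_model le u Lo Up) (c : rat) :
  0 < c ->
  (forall b, feq (Lo (c *: u) b) (fbool L (b < c))) /\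
  (forall b, feq (Up (c *: u) b) (fbool L (c < b))).
Proof.
have H' := H.
case: H' => _ [_ [_ [_ [_ [_ [_ [_ [_ [_ [_ [Hlou Hupu]]]]]]]]]]] c0.
case: (rat_frac c0) => m [n [hm [hn E]]].
case: m hm E => // m _ E; case: n hn E => // n _ E.
have m0 : (0 : rat) < m.+1%:R by rewrite ltr0n.
have n0 : (0 : rat) < n.+1%:R by rewrite ltr0n.
have hm0 : (m.+1%:R : rat) != 0 by rewrite pnatr_eq0.
have hlo : forall y, y < m.+1%:R -> fle (ftop L) (Lo (m.+1%:R *: u) y).
  move=> y hy.
  have h1 : y / m.+1%:R < 1 by rewrite ltr_pdivrMr // mul1r.
  have := proj2 (Hlou (y / m.+1%:R)); rewrite h1 => h2.
  apply: fle_tr h2 _; apply: fle_tr (F_kfold H m _ _) _.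
  rewrite mulrCA mulfV // mulr1; exact: fle_refl.
have hup : forall y, m.+1%:R < y -> fle (ftop L) (Up (m.+1%:R *: u) y).
  move=> y hy.
  have h1 : 1 < y / m.+1%:R by rewrite ltr_pdivlMr // mul1r.
  have := proj2 (Hupu (y / m.+1%:R)); rewrite h1 => h2.
  apply: fle_tr h2 _; apply: fle_tr (F_kfold_up H m _ _) _.
  rewrite mulrCA mulfV // mulr1; exact: fle_refl.
have Ev : n.+1%:R *: (c *: u) = m.+1%:R *: u by rewrite scalerA mulrC E.
apply: (F_const_of H).
- move=> x hx; apply: fle_tr (F_kfold H n _ _) _; rewrite Ev.
  apply: (F_ub H hup); rewrite -E mulrC ler_pM2l //.
- move=> x hx; apply: fle_tr (F_kfold_up H n _ _) _; rewrite Ev.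
  apply: (F_lb H hlo); rewrite -E mulrC ler_pM2r //.
Qed.

Lemma F_const (V : lmodType rat) (le : V -> V -> Prop) (u : V) (L : frame)
  (Lo Up : V -> rat -> L) (H : FUN_model le u Lo Up) (c : rat) :
  (forall b, feq (Lo (c *: u) b) (fbool L (b < c))) /\
  (forall b, feq (Up (c *: u) b) (fbool L (c < b))).
Proof.
have H' := H.
case: H' => _ [_ [_ [_ [_ [_ [Hlo0 [Hup0 _]]]]]]].
case: (ltgtP c 0) => hc.
- have hc' : 0 < - c by rewrite oppr_gt0.
  have [h1 h2] := F_const_pos H hc'.
  have Ec : c *: u = - ((- c) *: u) by rewrite scaleNr opprK.
  rewrite Ec; split => b.
  + apply: feq_trans (F_neg H _ _) _; apply: feq_trans (h2 _) _; rewrite ltrN2; exact: feq_refl.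
  + have h3 := F_neg H (- ((- c) *: u)) (- b); rewrite !opprK in h3.
    apply: feq_trans (feq_sym h3) _. apply: feq_trans (h1 _) _; rewrite ltrN2; exact: feq_refl.
- exact: (F_const_pos H hc).
- rewrite hc scale0r; split; [exact: Hlo0 | exact: Hup0].
Qed.

Lemma F_shift (V : lmodType rat) (le : V -> V -> Prop) (u : V) (L : frame)
  (Lo Up : V -> rat -> L) (H : FUN_model le u Lo Up) f (c : rat) :
  feq (Lo (f + c *: u) 0) (Lo f (- c)).
Proof.
have H' := H.
case: H' => _ [_ [Hlo_open [_ [_ [_ [_ [_ [Hladd _]]]]]]]].
have [hc _] := F_const H c.
split.
- apply: fle_tr (proj1 (Hladd _ _ _)) _; apply: supfam_lub => -[[a b] /= e].
  case hb: (b < c).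
  + apply: fle_tr (fmeet_l _ _) _; apply: (F_lo_le H).
    have -> : a = - b by apply/eqP; rewrite -addr_eq0 e.
    by rewrite lerN2 ltW.
  + apply: fle_tr (fmeet_r _ _) _; have := proj1 (hc b); rewrite hb => h.
    exact: fle_tr h (fbot_min _).
- apply: fle_tr (proj1 (Hlo_open _ _)) _; apply: supfam_lub => -[a ha] /=.
  have -> : (0 : rat) = a + - a by rewrite addrN.
  apply: fle_tr (F_meetadd_lo H f (c *: u) a (- a)).
  apply: fmeet_glb; first exact: fle_refl.
  apply: fle_tr (ftop_max _) _.
  have := proj2 (hc (- a)); rewrite ltrNl ha => h; exact: h.
Qed.

Lemma FUN_INT (V : lmodType rat) (le : V -> V -> Prop) (u : V) (HR : is_riesz le)
  (L : frame) (Lo Up : V -> rat -> L) (H : FUN_model le u Lo Up) :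
  INT_model le u (FUN_to_INT Lo).
Proof.
have H' := H.
case: H' => _ [_ [Hlo_open [_ [Hloc [_ [_ [_ [Hladd [_ [Hpos [Hlou _]]]]]]]]]]].
rewrite /INT_model /FUN_to_INT.
split.
  have := Hlou 0; rewrite ltr01 => h; exact: h.
split.
  move=> f; apply: le_bot; apply: fle_tr (F_meetadd_lo H _ _ _ _) _.
  rewrite addrN addr0; exact: (F_lo00 H).
split.
  move=> f g; apply: fle_tr (proj1 (Hladd _ _ _)) _; apply: supfam_lub => -[[a b] /= e].
  case: (leP 0 a) => ha.
  + apply: fle_tr (fmeet_l _ _) _; apply: fle_tr (F_lo_le H _ ha) _; exact: fjoin_l.
  + have hb : 0 <= b.
      have -> : b = - a by apply/eqP; rewrite -addr_eq0 addrC e.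
      by rewrite oppr_ge0 ltW.
    apply: fle_tr (fmeet_r _ _) _; apply: fle_tr (F_lo_le H _ hb) _; exact: fjoin_r.
split.
  move=> f hf; apply: le_bot.
  apply: fle_tr (proj1 (Hlo_open _ _)) _; apply: supfam_lub => -[p hp] /=.
  have h0 : le 0 (- f) by have := le_addr HR (- f) hf; rewrite add0r subrr.
  have hnp : - p < 0 by rewrite oppr_lt0.
  have h1 := proj1 (Hloc (- f) _ _ hnp).
  have h2 : fle (ftop L) (Lo (- f) (- p)).
    apply: fle_join_bot; apply: fle_tr h1 _; apply: fjoin_mono; first exact: fle_refl.
    exact: (proj1 (Hpos _ h0)).
  apply: fle_tr _ (F_lo00 H).
  have -> : (0 : rat) = p + - p by rewrite addrN.
  have -> : (0 : V) = f + - f by rewrite addrN.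
  apply: fle_tr (F_meetadd_lo H _ _ _ _).
  apply: fmeet_glb; first exact: fle_refl.
  exact: fle_tr (ftop_max _) h2.
move=> f.
apply: feq_trans (Hlo_open f 0) _.
apply: supfam_feq => -[s hs] /=.
apply: feq_sym; rewrite -scaleNr; apply: feq_trans (F_shift H _ _) _.
rewrite opprK; exact: feq_refl.
Qed.

Definition psi (z : int) : R := IZR (int_to_Z z).

Lemma psi_pos (n : nat) : psi (Posz n) = INR n.
Proof. by rewrite /psi /= INR_IZR_INZ. Qed.

Lemma psi_opp (z : int) : psi (- z) = (- psi z)%R.
Proof.
rewrite /psi; case: z => [[|n]|n] /=.
- rewrite /=; lra.
- by rewrite -opp_IZR.
- by rewrite -opp_IZR.
Qed.

Lemma int_cases (z : int) : exists n : nat, z = Posz n \/ z = - Posz n.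
Proof.
case: z => n; first by exists n; left.
exists n.+1; right; by rewrite NegzE.
Qed.

Lemma psi_addPN (a b : nat) : psi (Posz a - Posz b) = (INR a - INR b)%R.
Proof.
case: (leqP b a) => h.
- rewrite subzn // psi_pos minus_INR //; exact/ssrnat.leP.
- have -> : Posz a - Posz b = - Posz (b - a)%nat by rewrite -subzn ?opprB // ltnW.
  rewrite psi_opp psi_pos minus_INR; first lra.
  apply/ssrnat.leP; exact: ltnW.
Qed.

Lemma psi_add (x y : int) : psi (x + y) = (psi x + psi y)%R.
Proof.
case: (int_cases x) => a [->|->]; case: (int_cases y) => b [->|->].
- by rewrite -PoszD !psi_pos plus_INR.
- by rewrite psi_addPN psi_opp !psi_pos.
- by rewrite addrC psi_addPN psi_opp !psi_pos; lra.
- rewrite -opprD -PoszD psi_opp !psi_opp !psi_pos plus_INR; lra.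
Qed.

Lemma psi_mul (x y : int) : psi (x * y) = (psi x * psi y)%R.
Proof.
case: (int_cases x) => a [->|->]; case: (int_cases y) => b [->|->].
- by rewrite -PoszM !psi_pos mult_INR.
- rewrite mulrN -PoszM !psi_opp !psi_pos mult_INR; lra.
- rewrite mulNr -PoszM !psi_opp !psi_pos mult_INR; lra.
- rewrite mulrNN -PoszM !psi_opp !psi_pos mult_INR; lra.
Qed.

Lemma psi_gt0 (z : int) : 0 < z -> (0 < psi z)%R.
Proof.
case: z => // n h; rewrite psi_pos; apply: lt_0_INR; apply/ssrnat.ltP; exact: h.
Qed.

Lemma phi_def (q : rat) : rat_to_R q = (psi (numq q) / psi (denq q))%R.
Proof. by []. Qed.

Lemma phi_frac (x y : int) : 0 < y -> rat_to_R (x%:~R / y%:~R) = (psi x / psi y)%R.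
Proof.
move=> y0.
set q : rat := x%:~R / y%:~R.
have y0' : (y%:~R : rat) != 0 by rewrite intr_eq0 gt_eqF.
have hq : q * y%:~R = x%:~R by rewrite /q divfK.
have E : numq q * y = x * denq q.
  apply: (@intr_inj rat); rewrite !intrM numqE -hq.
  by rewrite mulrAC.
have E' := congr1 psi E; rewrite !psi_mul in E'.
have d0 := psi_gt0 (denq_gt0 q).
have y1 := psi_gt0 y0.
rewrite phi_def.
apply: (Rmult_eq_reg_r (psi (denq q) * psi y)); last by nra.
field_simplify; [| lra | lra].
rewrite E' Rmult_comm; reflexivity.
Qed.

Lemma phi_int (x : int) : rat_to_R (x%:~R) = psi x.
Proof.
have -> : (x%:~R : rat) = x%:~R / (1 : int)%:~R by rewrite divr1.
rewrite phi_frac // (_ : psi 1 = 1%R); last by [].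
by rewrite Rdiv_1_r.
Qed.

Lemma phi_nat (n : nat) : rat_to_R (n%:R) = INR n.
Proof. by rewrite -psi_pos -phi_int. Qed.

Lemma phi0 : rat_to_R 0 = 0%R.
Proof. by rewrite (_ : (0 : rat) = (0 : nat)%:R) // phi_nat. Qed.
Lemma phi1 : rat_to_R 1 = 1%R.
Proof. by rewrite (_ : (1 : rat) = (1 : nat)%:R) // phi_nat. Qed.

Lemma phi_add (a b : rat) : rat_to_R (a + b) = (rat_to_R a + rat_to_R b)%R.
Proof.
have da := denq_gt0 a; have db := denq_gt0 b.
have da' : ((denq a)%:~R : rat) != 0 by rewrite intr_eq0 gt_eqF.
have db' : ((denq b)%:~R : rat) != 0 by rewrite intr_eq0 gt_eqF.
have -> : a + b = (numq a * denq b + numq b * denq a)%:~R / (denq a * denq b)%:~R.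
  by rewrite -{1}(divq_num_den a) -{1}(divq_num_den b) addf_div // intrD !intrM.
rewrite phi_frac ?mulr_gt0 // psi_add !psi_mul !phi_def.
have := psi_gt0 da; have := psi_gt0 db => h1 h2.
field; lra.
Qed.

Lemma phi_opp (a : rat) : rat_to_R (- a) = (- rat_to_R a)%R.
Proof.
have := phi_add a (- a); rewrite addrN phi0 => h; lra.
Qed.

Lemma phi_sub (a b : rat) : rat_to_R (a - b) = (rat_to_R a - rat_to_R b)%R.
Proof. rewrite phi_add phi_opp; lra. Qed.

Lemma phi_gt0 (a : rat) : 0 < a -> (0 < rat_to_R a)%R.
Proof.
move=> h; rewrite phi_def.
have h1 := psi_gt0 (denq_gt0 a).
have h2 : 0 < numq a by rewrite numq_gt0.
have h3 := psi_gt0 h2.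
apply: Rdiv_lt_0_compat => //.
Qed.

Lemma phi_lt (a b : rat) : a < b -> (rat_to_R a < rat_to_R b)%R.
Proof.
move=> h; have : 0 < b - a by rewrite subr_gt0.
move/phi_gt0; rewrite phi_sub; lra.
Qed.

Lemma phi_le (a b : rat) : a <= b -> (rat_to_R a <= rat_to_R b)%R.
Proof.
rewrite le_eqVlt => /orP [/eqP ->|h]; first lra.
have := phi_lt h; lra.
Qed.

Lemma phi_lt_rev (a b : rat) : (rat_to_R a < rat_to_R b)%R -> a < b.
Proof.
move=> h; case: (ltP a b) => // h2.
have := phi_le h2; lra.
Qed.

Definition zint (z : Z) : int :=
  match z with
  | Z0 => 0
  | Zpos p => Posz (Pos.to_nat p)
  | Zneg p => - Posz (Pos.to_nat p)
  end.

Lemma psi_zint (z : Z) : psi (zint z) = IZR z.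
Proof.
case: z => [|p|p] /=.
- by [].
- by rewrite psi_pos INR_IPR.
- by rewrite psi_opp psi_pos INR_IPR.
Qed.

Lemma phi_dense (x y : R) : (x < y)%R -> exists q : rat, (x < rat_to_R q < y)%R.
Proof.
move=> h.
have [N [hN N0]] := archimed_cor1 (y - x) ltac:(lra).
have N0' : (0 < INR N)%R by apply: lt_0_INR.
have [h1 h2] := archimed (INR N * x).
exists ((zint (up (INR N * x)))%:~R / (Posz N)%:~R).
have Np : 0 < Posz N by apply/ssrnat.ltP.
rewrite phi_frac // psi_zint psi_pos.
set z := IZR (up (INR N * x)) in h1 h2 *.
split.
- apply: (Rmult_lt_reg_r (INR N)) => //.
  field_simplify; lra.
- have : (z <= INR N * x + 1)%R by lra.
  move=> h3.
  have h4 : (z / INR N <= x + / INR N)%R.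
    apply: (Rmult_le_reg_r (INR N)) => //.
    field_simplify; lra.
  lra.
Qed.

Lemma cut_eq (x y : R) :
  (forall q : rat, (rat_to_R q < x)%R <-> (rat_to_R q < y)%R) -> x = y.
Proof.
move=> h.
case: (Rtotal_order x y) => [hl|[//|hl]].
- have [q [q1 q2]] := phi_dense hl.
  have := (proj2 (h q)) q2; lra.
- have [q [q1 q2]] := phi_dense hl.
  have := (proj1 (h q)) q2; lra.
Qed.

Lemma add_scale (V : lmodType rat) (I : V -> R)
  (Hadd : forall f g, I (f + g) = (I f + I g)%R) (r : rat) f :
  I (r *: f) = (rat_to_R r * I f)%R.
Proof.
have I0 : I 0 = 0%R by have := Hadd 0 0; rewrite addr0; lra.
have Iopp : forall g, I (- g) = (- I g)%R.
  by move=> g; have := Hadd g (- g); rewrite addrN I0; lra.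
have Inat : forall (n : nat) g, I (n%:R *: g) = (INR n * I g)%R.
  move=> n g; elim: n => [|n IH]; first by rewrite scale0r I0 /=; lra.
  rewrite -natr1 scalerDl scale1r Hadd IH S_INR; lra.
have Iint : forall (z : int) g, I (z%:~R *: g) = (psi z * I g)%R.
  move=> z g; case: (int_cases z) => n [->|->].
  - by rewrite psi_pos -Inat.
  - rewrite mulrNz scaleNr Iopp psi_opp psi_pos -[(Posz n)%:~R]/(n%:R : rat) Inat; lra.
have E : (denq r)%:~R *: (r *: f) = (numq r)%:~R *: f by rewrite scalerA mulrC numqE.
have := congr1 I E; rewrite !Iint => h.
have d0 := psi_gt0 (denq_gt0 r).
rewrite phi_def.
apply: (Rmult_eq_reg_l (psi (denq r))); last lra.
rewrite h; field; lra.
Qed.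

Lemma PF_supfam (I : Type) (F : I -> Prop) : @supfam PropFrame I F <-> exists i, F i.
Proof.
split.
- move=> [a [[i ->] h]]; by exists i.
- move=> [i h]; exists (F i); split => //; by exists i.
Qed.

Lemma PF_join (a b : Prop) : @fjoin PropFrame a b <-> a \/ b.
Proof.
split.
- move=> [x [[->|->] h]]; [by left | by right].
- move=> [h|h]; [exists a | exists b]; tauto.
Qed.

Lemma point_integral (V : lmodType rat) (le : V -> V -> Prop) (u : V)
  (HR : is_riesz le) (Hu : strong_unit le u)
  (P : V -> Prop) (HP : INT_model le u (L := PropFrame) P) :
  exists I : V -> R, is_integral le u I /\ forall f, P f <-> Rlt 0%R (I f).
Proof.
have H := @INT_FUN V le u HR Hu PropFrame P HP.
set Lo := @INT_to_FUN_Lo V u PropFrame P in H.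
set Up := @INT_to_FUN_Up V u PropFrame P in H.
case: H => Hlm [_ [Hlo [_ [Hloc [_ [_ [_ [Hladd [_ [Hpos [Hlou _]]]]]]]]]]].
have Lmono : forall f p p', p' <= p -> Lo f p -> Lo f p'.
  move=> f p p'; rewrite le_eqVlt => /orP [/eqP ->|h] //; exact: Hlm.
have Lopen : forall f p, Lo f p -> exists p', p < p' /\ Lo f p'.
  move=> f p h; have := proj1 (Hlo f p) h; move/PF_supfam => [[p' hp] /= h'].
  by exists p'.
have Ladd : forall f g r, Lo (f + g) r <-> exists a b, a + b = r /\ Lo f a /\ Lo g b.
  move=> f g r; split.
  - move=> h; have := proj1 (Hladd f g r) h; move/PF_supfam => [[[a b] /= e] [h1 h2]].
    by exists a, b.
  - move=> [a [b [e [h1 h2]]]]; apply: (proj2 (Hladd f g r)); apply/PF_supfam.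
    by exists (exist _ (a, b) e).
have Lu : forall q, Lo u q <-> q < 1.
  move=> q; have [h1 h2] := Hlou q; split.
  - move=> h; have := h1 h; by case: (q < 1).
  - move=> h; apply: h2; by rewrite h.
have HP' := HP.
case: HP' => Hu1 [_ [_ [Hle0 _]]].
have Lbnd : forall f, (exists p, Lo f p) /\ (exists q, ~ Lo f q).
  move=> f; case: (Hu f) => n [hf1 hf2]; split.
  - exists (- (n.+1%:R)); rewrite /Lo /INT_to_FUN_Lo.
    apply: (P_mono HR HP (a := u)); last by apply: (proj2 Hu1).
    apply: le_of_0sub => //.
    rewrite scaleNr opprK.
    have -> : f + n.+1%:R *: u - u = f - - (n%:R *: u).
      by rewrite -natr1 scalerDl scale1r opprK addrA addrK.
    exact: le_0sub.
  - exists n%:R; rewrite /Lo /INT_to_FUN_Lo => h.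
    exact: (proj1 (Hle0 _ (le_sub0 HR hf2)) h).
pose E f := fun x => exists q, x = rat_to_R q /\ Lo f q.
have hb : forall f, bound (E f).
  move=> f; case: (proj2 (Lbnd f)) => q hq; exists (rat_to_R q) => x [q' [-> h']].
  apply: phi_le; case: (leP q' q) => // hqq; exfalso; apply: hq; exact: Lmono _ _ _ (ltW hqq) h'.
have hne : forall f, exists x, E f x.
  move=> f; case: (proj1 (Lbnd f)) => p hp; by exists (rat_to_R p), p.
pose I f := proj1_sig (completeness (E f) (hb f) (hne f)).
have Ilub : forall f, is_lub (E f) (I f).
  move=> f; exact: proj2_sig (completeness (E f) (hb f) (hne f)).
have KEY : forall f q, Lo f q <-> (rat_to_R q < I f)%R.
  move=> f q; split.
  - move=> h; case: (Lopen _ _ h) => p' [hp' h'].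
    have := proj1 (Ilub f) (rat_to_R p') (ex_intro _ p' (conj erefl h')).
    have := phi_lt hp'; lra.
  - move=> h; apply: NNPP => hn.
    have ub : is_upper_bound (E f) (rat_to_R q).
      move=> x [q' [-> h']]; apply: phi_le.
      case: (leP q' q) => // hqq; exfalso; apply: hn; exact: Lmono _ _ _ (ltW hqq) h'.
    have := proj2 (Ilub f) _ ub; lra.
have Iadd : forall f g, I (f + g) = (I f + I g)%R.
  move=> f g; apply: cut_eq => r; split.
  - move/KEY/Ladd => [a [b [e [h1 h2]]]].
    move/KEY: h1; move/KEY: h2; rewrite -e phi_add; lra.
  - move=> h.
    have [q [q1 q2]] := phi_dense (x := (rat_to_R r - I g)%R) (y := I f) ltac:(lra).
    apply/KEY/Ladd; exists q, (r - q); split; first by rewrite addrC subrK.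
    split; apply/KEY => //; rewrite phi_sub; lra.
exists I; split; last first.
  move=> f; have := KEY f 0; rewrite /Lo /INT_to_FUN_Lo scale0r subr0 phi0; move=> hh; exact: hh.
split => //.
split; first by move=> r f; apply: add_scale.
split.
  move=> f hf; case: (Rle_or_lt 0 (I f)) => // hlt; exfalso.
  have [q [q1 q2]] := phi_dense hlt.
  have hq : q < 0 by apply: phi_lt_rev; rewrite phi0.
  have := proj1 (Hloc f q 0 hq) Logic.I.
  move/PF_join => [h|h].
  - move/KEY: h; lra.
  - exact: (proj1 (Hpos f hf) h).
apply: cut_eq => q; split.
- move/KEY/Lu => h; rewrite -phi1; exact: phi_lt.
- move=> h; apply/KEY/Lu; apply: phi_lt_rev; rewrite phi1; exact: h.
Qed.

Lemma integral_shift (V : lmodType rat) (le : V -> V -> Prop) (u : V) (I : V -> R)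
  (HI : is_integral le u I) f q : I (f - q *: u) = (I f - rat_to_R q)%R.
Proof.
case: HI => Hadd [Hsc [_ Hu1]].
rewrite -scaleNr Hadd Hsc Hu1 phi_opp; lra.
Qed.

Lemma integral_opp (V : lmodType rat) (le : V -> V -> Prop) (u : V) (I : V -> R)
  (HI : is_integral le u I) f : I (- f) = (- I f)%R.
Proof.
case: HI => Hadd _.
have I0 : I 0 = 0%R by have := Hadd 0 0; rewrite addr0; lra.
have := Hadd f (- f); rewrite addrN I0; lra.
Qed.

Lemma integral_unique (V : lmodType rat) (le : V -> V -> Prop) (u : V)
  (I J : V -> R) (HI : is_integral le u I) (HJ : is_integral le u J) :
  (forall f, Rlt 0%R (I f) <-> Rlt 0%R (J f)) -> forall f, I f = J f.
Proof.
move=> h f; apply: cut_eq => q.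
have := h (f - q *: u); rewrite (integral_shift HI) (integral_shift HJ).
move=> [h1 h2]; split => hh.
- have := h1 ltac:(lra); lra.
- have := h2 ltac:(lra); lra.
Qed.

Lemma integral_point (V : lmodType rat) (le : V -> V -> Prop) (u : V)
  (HR : is_riesz le) (I : V -> R) (HI : is_integral le u I) :
  INT_model le u (L := PropFrame) (fun f => Rlt 0%R (I f)).
Proof.
have HI' := HI.
case: HI' => Hadd [Hsc [Hpos Hu1]].
split.
  split => //= _; rewrite Hu1; lra.
split.
  move=> f; split => //=; rewrite (integral_opp HI); lra.
split.
  move=> f g /= h; apply/PF_join; rewrite Hadd in h.
  case: (Rlt_or_le 0 (I f)) => h1; [by left | right; lra].
split.
  move=> f hf; split => //= h.
  have h0 : le 0 (- f) by have := le_addr HR (- f) hf; rewrite add0r subrr.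
  have := Hpos _ h0; rewrite (integral_opp HI); lra.
move=> f; split => /=.
- move=> h.
  have [q [q1 q2]] := phi_dense h.
  have hq : 0 < q by apply: phi_lt_rev; rewrite phi0.
  apply/PF_supfam; exists (exist _ q hq) => /=.
  rewrite (integral_shift HI); lra.
- move/PF_supfam => [[s hs] /=]; rewrite (integral_shift HI).
  have := phi_gt0 hs; lra.
Qed.

Theorem lemma3p4 (V : lmodType rat) (le : V -> V -> Prop) (u : V)
  (HR : is_riesz le) (Hu : strong_unit le u) :
  (forall L : frame,
     (* INT -> FUN interpretation sends models to models *)
     (forall P : V -> L, INT_model le u P ->
        FUN_model le u (INT_to_FUN_Lo u P) (INT_to_FUN_Up u P)) /\
     (* FUN -> INT interpretation sends models to models *)
     (forall Lo Up : V -> rat -> L, FUN_model le u Lo Up ->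
        INT_model le u (FUN_to_INT Lo)) /\
     (* mutually inverse *)
     (forall P : V -> L, INT_model le u P ->
        forall f, feq (FUN_to_INT (INT_to_FUN_Lo u P) f) (P f)) /\
     (forall Lo Up : V -> rat -> L, FUN_model le u Lo Up ->
        forall f (p : rat),
          feq (INT_to_FUN_Lo u (FUN_to_INT Lo) f p) (Lo f p) /\
          feq (INT_to_FUN_Up u (FUN_to_INT Lo) f p) (Up f p))) /\
  (* points of INT correspond exactly to integrals *)
  (forall P : V -> Prop, INT_model le u (L := PropFrame) P ->
     exists I : V -> R, is_integral le u I /\
       forall f, P f <-> Rlt 0%R (I f)) /\
  (forall I J : V -> R, is_integral le u I -> is_integral le u J ->
     (forall f, Rlt 0%R (I f) <-> Rlt 0%R (J f)) -> forall f, I f = J f) /\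
  (forall I : V -> R, is_integral le u I ->
     INT_model le u (L := PropFrame) (fun f => Rlt 0%R (I f))).
Proof.
split.
  move=> L; split; first by move=> P HP; exact: INT_FUN.
  split; first by move=> Lo Up H; exact: (FUN_INT HR H).
  split.
    move=> P HP f; rewrite /FUN_to_INT /INT_to_FUN_Lo scale0r subr0; exact: feq_refl.
  move=> Lo Up H f p; rewrite /FUN_to_INT /INT_to_FUN_Lo /INT_to_FUN_Up; split.
  - rewrite -scaleNr; apply: feq_trans (F_shift H _ _) _; rewrite opprK; exact: feq_refl.
  - rewrite addrC; apply: feq_trans (F_shift H _ _) _.
    have := F_neg H f (- p); rewrite opprK; move=> hh; exact: hh.
split; first by move=> P HP; exact: (point_integral HR Hu HP).
split; first by move=> I J HI HJ; exact: (integral_unique HI HJ).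
move=> I HI; exact: (integral_point HR HI).
Qed.
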